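(* Let $A=\mathbb C\langle u^{\pm1},v^{\pm1}\rangle$ and $c=uvu^{-1}v^{-1}$. For every $H\in A$ one has $\{H,c\}_K=0$; in particular, for each $H$ (equivalently each class in $A/[A,A]$, since $\{H,\cdot\}_K$ depends only on $\pi(H)$) the Hamilton flow $\frac{d}{dt}x=\{H,x\}_K$ preserves $c$.
   Context: $A$ is the group algebra over $\mathbb C$ of the free group on $u,v$; $[A,A]$ is the span of all $ab-ba$; $\pi:A\to A/[A,A]$ the projection. $\mu(a\otimes b)=ab$; $A\otimes A$ has componentwise multiplication. The double bracket $\llbracket\cdot\rrbracket_K:A\otimes A\to A\otimes A$ is the linear map with $\llbracket u\otimes v\rrbracket_K=-vu\otimes1$, $\llbracket v\otimes u\rrbracket_K=uv\otimes1$, $\llbracket u\otimes u\rrbracket_K=\llbracket v\otimes v\rrbracket_K=0$, extended (also to inverse letters) by the Leibniz rules $\llbracket a\otimes bc\rrbracket_K=\llbracket a\otimes b\rrbracket_K(1\otimes c)+(b\otimes1)\llbracket a\otimes c\rrbracket_K$ and $\llbracket ab\otimes c\rrbracket_K=\llbracket a\otimes c\rrbracket_K(b\otimes1)+(1\otimes a)\llbracket b\otimes c\rrbracket_K$. The bracket is $\{a,b\}_K=\mu(\llbracket a\otimes b\rrbracket_K)$. *)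

(* Defs.v *)
(* Coefficients: the complex numbers R[i] = complex R over an
   arbitrary realType R (every realType is a model of the real numbers).
   The group algebra C<u^{+-1},v^{+-1}> of the free group F(u,v) is the
   free C-module {malg C[fgrp]} on the free group fgrp, whose elements are
   represented by reduced words. *)
From HB Require Import structures.
From mathcomp Require Import all_boot all_order all_algebra.
From mathcomp Require Import reals.
From mathcomp Require Import complex.
From mathcomp Require Import finmap.
From mathcomp.multinomials Require Import monalg.

Set Implicit Arguments.
Unset Strict Implicit.
Unset Printing Implicit Defensive.

Import GRing.Theory Num.Theory.
Local Open Scope ring_scope.

(* A letter is (g, e): g = false for u, g = true for v;                 *)
(* e = false for the letter itself, e = true for its inverse.           *)
Definition letter := (bool * bool)%type.
Definition word := seq letter.
Definition inv_letter (l : letter) : letter := (l.1, ~~ l.2).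

Definition lu : letter := (false, false).
Definition lv : letter := (true, false).
Definition lui : letter := (false, true).
Definition lvi : letter := (true, true).

Definition reduced (w : word) : bool :=
  sorted (fun a b => b != inv_letter a) w.

Definition red_cons (l : letter) (w : word) : word :=
  if w is l' :: w' then (if l' == inv_letter l then w' else l :: w) else [:: l].
Definition reduce (w : word) : word := foldr red_cons [::] w.

Lemma reduce_reduced (w : word) : reduced (reduce w).
Proof.
rewrite /reduced; elim: w => [|l w IH] //=.
case: (reduce w) IH => [|l' w'] //= Hp.
case: eqP => [_|Hne]; first by case: w' Hp => //= a w'' /andP[].
by rewrite /= Hp andbT; apply/eqP.
Qed.

Definition fgrp := {w : word | reduced w}.

Definition fg (w : word) : fgrp := exist _ (reduce w) (reduce_reduced w).
Definition fmul (x y : fgrp) : fgrp := fg (val x ++ val y).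

Section GroupAlgebra.
Variable R : realType.
Local Notation C := R[i].

(* A = C[F(u,v)], and A (x) A = C[F(u,v) x F(u,v)] *)
Definition A := {malg C[fgrp]}.
Definition AA := {malg C[(fgrp * fgrp)%type]}.

Definition amul (f g : A) : A :=
  \sum_(x <- msupp f) \sum_(y <- msupp g) << f@_x * g@_y *g fmul x y >>.

Definition tens (f g : A) : AA :=
  \sum_(x <- msupp f) \sum_(y <- msupp g) << f@_x * g@_y *g (x, y) >>.

Definition mu (t : AA) : A :=
  \sum_(p <- msupp t) << t@_p *g fmul p.1 p.2 >>.

Definition tact (a1 a2 b1 b2 : word) (t : AA) : AA :=
  \sum_(p <- msupp t)
     << t@_p *g (fg (a1 ++ val p.1 ++ b1), fg (a2 ++ val p.2 ++ b2)) >>.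

Definition bt (w1 w2 : word) : AA := << (fg w1, fg w2) >>.

(* values on generators:  [[u (x) v]] = - vu (x) 1,  [[v (x) u]] = uv (x) 1,
   [[u (x) u]] = [[v (x) v]] = 0 *)
Definition bgen (x y : bool) : AA :=
  match x, y with
  | false, true => - bt [:: lv; lu] [::]
  | true, false => bt [:: lu; lv] [::]
  | _, _ => 0
  end.

(* extension to inverse letters, forced by the Leibniz rules:
   [[a (x) y^-1]] = - (y^-1 (x) 1) [[a (x) y]] (1 (x) y^-1)
   [[x^-1 (x) c]] = - (1 (x) x^-1) [[x (x) c]] (x^-1 (x) 1) *)
Definition bl1 (x : bool) (m : letter) : AA :=
  if m.2 then - tact [:: m] [::] [::] [:: m] (bgen x m.1) else bgen x m.1.
Definition bl (l m : letter) : AA :=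
  if l.2 then - tact [::] [:: l] [:: l] [::] (bl1 l.1 m) else bl1 l.1 m.

(* Leibniz rule in the second argument:
   [[a (x) m w]] = [[a (x) m]] (1 (x) w) + (m (x) 1) [[a (x) w]] *)
Fixpoint dbr_lw (l : letter) (w : word) : AA :=
  match w with
  | [::] => 0
  | m :: w' => tact [::] [::] [::] w' (bl l m) + tact [:: m] [::] [::] [::] (dbr_lw l w')
  end.

(* Leibniz rule in the first argument:
   [[l w (x) c]] = [[l (x) c]] (w (x) 1) + (1 (x) l) [[w (x) c]] *)
Fixpoint dbrw (w1 w2 : word) : AA :=
  match w1 with
  | [::] => 0
  | l :: w1' => tact [::] [::] w1' [::] (dbr_lw l w2) + tact [::] [:: l] [::] [::] (dbrw w1' w2)
  end.

Definition dbrK (t : AA) : AA :=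
  \sum_(p <- msupp t) t@_p *: dbrw (val p.1) (val p.2).

Definition brK (a b : A) : A := mu (dbrK (tens a b)).

Definition cK : A := << fg [:: lu; lv; lui; lvi] >>.

End GroupAlgebra.

(* Main.v *)
Require Import Defs.
From HB Require Import structures.
From mathcomp Require Import all_boot all_order all_algebra.
From mathcomp Require Import reals complex.
From mathcomp Require Import finmap.
From mathcomp.multinomials Require Import monalg.
Local Open Scope ring_scope.
Import GRing.Theory Num.Theory.


Lemma inv_letterK : involutive inv_letter.
Proof. by case=> a b; rewrite /inv_letter /= negbK. Qed.

Lemma red_cancel l s : reduced s -> red_cons l (red_cons (inv_letter l) s) = s.
Proof.
case: s => [|m s] /=; first by rewrite /red_cons eqxx.
rewrite /red_cons inv_letterK; case: eqP => [->|ne] /=.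
  case: s => [|m' s] //= /andP[/negPf -> _] //.
by rewrite eqxx.
Qed.

Lemma reduce_foldr x s : reduced s ->
  foldr red_cons s x = foldr red_cons s (reduce x).
Proof.
move=> rs; elim: x => [|l x IH] //=.
rewrite IH.
case E: (reduce x) => [|l' r] /=; first by [].
case: eqP => [->|_] //=.
apply: red_cancel.
  elim: r {E} => [|m r IHr] //=.
  move: IHr; rewrite /reduced.
  case: (foldr red_cons s r) => [|m' r'] //= Hp.
  case: eqP => [_|Hne]; first by case: r' Hp => //= a r'' /andP[].
  by rewrite /= Hp andbT; apply/eqP.
Qed.

Lemma foldr_reduced x s : reduced s -> reduced (foldr red_cons s x).
Proof.
move=> rs; elim: x => [|m r IHr] //=.
move: IHr; rewrite /reduced.
case: (foldr red_cons s r) => [|m' r'] //= Hp.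
case: eqP => [_|Hne]; first by case: r' Hp => //= a r'' /andP[].
by rewrite /= Hp andbT; apply/eqP.
Qed.

Lemma reduce_mid x y z : reduce (x ++ reduce y ++ z) = reduce (x ++ y ++ z).
Proof.
rewrite /reduce !foldr_cat; congr foldr.
by rewrite -reduce_foldr // foldr_reduced.
Qed.

Lemma fg_mid x y z : fg (x ++ reduce y ++ z) = fg (x ++ y ++ z).
Proof. by apply: val_inj; rewrite /= reduce_mid. Qed.

Lemma fg_fmul x y : fmul (fg x) (fg y) = fg (x ++ y).
Proof.
rewrite /fmul /=. rewrite -[reduce x ++ _]cat0s fg_mid.
by rewrite -[x ++ reduce y]cats0 -catA fg_mid cats0.
Qed.


Section Lin.
Context {R : realType}.
Local Notation C := R[i].

Definition Lin {K : choiceType} {V : lmodType C} (f : K -> V) (t : {malg C[K]}) : V :=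
  \sum_(k <- msupp t) t@_k *: f k.

Lemma LinEw {K : choiceType} {V : lmodType C} (f : K -> V) t (d : {fset K}) :
  (msupp t `<=` d)%fset -> Lin f t = \sum_(k <- d) t@_k *: f k.
Proof.
move=> le; rewrite /Lin (big_fset_incl _ le) //= => x _ /mcoeff_outdom ->.
by rewrite scale0r.
Qed.

Lemma LinD {K : choiceType} {V : lmodType C} (f : K -> V) t1 t2 :
  Lin f (t1 + t2) = Lin f t1 + Lin f t2.
Proof.
have h1 : (msupp t1 `<=` msupp t1 `|` msupp t2)%fset by apply: fsubsetUl.
have h2 : (msupp t2 `<=` msupp t1 `|` msupp t2)%fset by apply: fsubsetUr.
rewrite (LinEw _ _ _ (msuppD_le t1 t2)) (LinEw _ _ _ h1) (LinEw _ _ _ h2) -big_split /=.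
by apply: eq_bigr => k _; rewrite mcoeffD scalerDl.
Qed.

Lemma Lin0 {K : choiceType} {V : lmodType C} (f : K -> V) : Lin f 0 = 0.
Proof. by rewrite /Lin msupp0 big_seq_fset0. Qed.

Lemma LinZ {K : choiceType} {V : lmodType C} (f : K -> V) c t :
  Lin f (c *: t) = c *: Lin f t.
Proof.
rewrite (LinEw _ _ _ (msuppZ_le c t)) /Lin scaler_sumr.
by apply: eq_bigr => k _; rewrite mcoeffZ scalerA.
Qed.

Lemma LinN {K : choiceType} {V : lmodType C} (f : K -> V) t :
  Lin f (- t) = - Lin f t.
Proof. by rewrite -(scaleN1r t) LinZ scaleN1r. Qed.

Lemma LinU {K : choiceType} {V : lmodType C} (f : K -> V) c k :
  Lin f << c *g k >> = c *: f k.
Proof. by rewrite (LinEw _ _ _ msuppU_le) big_seq_fset1 mcoeffUU. Qed.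

Lemma Lin_sum {K : choiceType} {V : lmodType C} (f : K -> V) (I : Type) (s : seq I) (F : I -> _) :
  Lin f (\sum_(i <- s) F i) = \sum_(i <- s) Lin f (F i).
Proof. exact: (big_morph _ (LinD f) (Lin0 f)). Qed.

Lemma Lin_comp {K K' : choiceType} {V : lmodType C} (f : K' -> V) (g : K -> {malg C[K']}) t :
  Lin f (Lin g t) = Lin (fun k => Lin f (g k)) t.
Proof. by rewrite [Lin g t]/Lin Lin_sum; apply: eq_bigr => k _; rewrite LinZ. Qed.

Lemma Lin_ext {K : choiceType} {V : lmodType C} (f g : K -> V) t :
  (forall k, f k = g k) -> Lin f t = Lin g t.
Proof. by move=> e; apply: eq_bigr => k _; rewrite e. Qed.

Lemma malgU_scale {K : choiceType} (c : C) (k : K) : << c *g k >> = c *: << k >>.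
Proof.
apply/malgP => k'; rewrite mcoeffZ !mcoeffU.
by case: eqP => _; rewrite ?mulr1 ?mulr0.
Qed.

Lemma Lin_def {K K' : choiceType} (h : K -> K') t :
  \sum_(p <- msupp t) << t@_p *g h p >> = Lin (fun p => << h p >> : {malg C[K']}) t.
Proof. by apply: eq_bigr => k _; rewrite malgU_scale. Qed.

End Lin.

Lemma fg_mid2 x y z w v :
  fg (x ++ reduce y ++ z ++ reduce w ++ v) = fg (x ++ y ++ z ++ w ++ v).
Proof.
rewrite fg_mid.
have -> : x ++ y ++ z ++ reduce w ++ v = (x ++ y ++ z) ++ reduce w ++ v by rewrite !catA.
by rewrite fg_mid !catA.
Qed.

Lemma fgQ p Q s : fg (reduce p ++ Q ++ reduce s) = fg (p ++ Q ++ s).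
Proof.
rewrite -[reduce p ++ _]cat0s fg_mid /=.
have -> : p ++ Q ++ reduce s = (p ++ Q) ++ reduce s ++ [::] by rewrite cats0 catA.
by rewrite fg_mid cats0 catA.
Qed.

Fact Ins_key : unit. Proof. exact: tt. Qed.
Definition Ins_def (R : realType) (a b c : word) (t : AA R) : A R :=
  Lin (fun p : fgrp * fgrp => << fg (a ++ val p.1 ++ b ++ val p.2 ++ c) >> : A R) t.
Definition Ins := locked_with Ins_key Ins_def.
Lemma InsE : Ins = Ins_def. Proof. by rewrite /Ins unlock. Qed.

Fact tactL_key : unit. Proof. exact: tt. Qed.
Definition tactL := locked_with tactL_key (@tact).
Lemma tactE : @tact = tactL. Proof. by rewrite /tactL unlock. Qed.

Fact btL_key : unit. Proof. exact: tt. Qed.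
Definition btL := locked_with btL_key (@bt).
Lemma btE : @bt = btL. Proof. by rewrite /btL unlock. Qed.

Section Main.
Variable R : realType.

Lemma InsD a b c t1 t2 : Ins R a b c (t1 + t2) = Ins R a b c t1 + Ins R a b c t2.
Proof. rewrite InsE; exact: LinD. Qed.
Lemma InsN a b c t : Ins R a b c (- t) = - Ins R a b c t.
Proof. rewrite InsE; exact: LinN. Qed.
Lemma Ins0 a b c : Ins R a b c 0 = 0.
Proof. rewrite InsE; exact: Lin0. Qed.

Lemma Ins_bt a b c x y : Ins R a b c (btL R x y) = << fg (a ++ x ++ b ++ y ++ c) >>.
Proof. by rewrite -btE InsE /Ins_def /bt LinU scale1r /= fg_mid2. Qed.

Lemma Ins_btQ a b1 Q b2 c x y :
  Ins R a (b1 ++ Q ++ b2) c (btL R x y) = << fg (reduce (a ++ x ++ b1) ++ Q ++ reduce (b2 ++ y ++ c)) >>.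
Proof. by rewrite Ins_bt fgQ !catA. Qed.

Lemma Ins_tact a b c a1 a2 b1 b2 t :
  Ins R a b c (tactL R a1 a2 b1 b2 t) = Ins R (a ++ a1) (b1 ++ b ++ a2) (b2 ++ c) t.
Proof.
rewrite -tactE InsE /tact Lin_def /Ins_def Lin_comp; apply: Lin_ext => p.
by rewrite LinU scale1r /= fg_mid2 !catA.
Qed.

Lemma mu_Ins t : mu t = Ins R [::] [::] [::] t.
Proof.
rewrite InsE /mu Lin_def /Ins_def; apply: Lin_ext => p /=.
by rewrite cats0.
Qed.

End Main.

Definition cw : word := [:: lu; lv; lui; lvi].
Definition Phi (R : realType) (Q : word) : A R := << fg ([:: lu; lv] ++ Q ++ [:: lui; lvi]) >>.

Definition beq (a b : bool) := if a then b else ~~ b.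
Definition red_cons' (l : letter) (w : word) : word :=
  match w with
  | l' :: w' => if beq l'.1 l.1 && beq l'.2 (negb l.2) then w' else l :: w
  | [::] => [:: l]
  end.
Definition reduce' (w : word) : word := foldr red_cons' [::] w.

Lemma reduce'E w : reduce w = reduce' w.
Proof.
elim: w => [|l w IH] //=; rewrite -IH /red_cons /red_cons'.
case: (reduce w) => [|[a b] w'] //=; case: l => c d /=.
by case: a; case: b; case: c; case: d.
Qed.

Section L.
Variable R : realType.

Lemma Ins_dbr_cw a b c l : Ins R a b c (dbr_lw R l cw) =
  Ins R a b ([:: lv; lui; lvi] ++ c) (bl R l lu) + Ins R (a ++ [::lu]) b ([:: lui; lvi] ++ c) (bl R l lv)
  + Ins R (a ++ [::lu;lv]) b ([::lvi] ++ c) (bl R l lui) + Ins R (a ++ [::lu;lv;lui]) b c (bl R l lvi).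
Proof.
rewrite /cw; cbn [dbr_lw].
move: (bl R l lu) (bl R l lv) (bl R l lui) (bl R l lvi) => t1 t2 t3 t4.
rewrite tactE.
rewrite !(InsD, Ins_tact, Ins0) addr0 !addrA /=.
by rewrite !cats0 -!catA.
Qed.

Lemma Ins_bl_ff a b c x y : Ins R a b c (bl R (x,false) (y,false)) = Ins R a b c (bgen R x y).
Proof. by []. Qed.
Lemma Ins_bl_ft a b c x y : Ins R a b c (bl R (x,false) (y,true)) =
  - Ins R (a ++ [::(y,true)]) b ([::(y,true)] ++ c) (bgen R x y).
Proof. by rewrite /bl /bl1 /= tactE InsN Ins_tact cats0 cat0s. Qed.
Lemma Ins_bl_tf a b1 Q b2 c x y : Ins R a (b1 ++ Q ++ b2) c (bl R (x,true) (y,false)) =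
  - Ins R a (((x,true) :: b1) ++ Q ++ (b2 ++ [::(x,true)])) c (bgen R x y).
Proof. by rewrite /bl /bl1 /= tactE InsN Ins_tact cats0 cat0s -!catA. Qed.
Lemma Ins_bl_tt a b1 Q b2 c x y : Ins R a (b1 ++ Q ++ b2) c (bl R (x,true) (y,true)) =
  Ins R (a ++ [::(y,true)]) (((x,true) :: b1) ++ Q ++ (b2 ++ [::(x,true)])) ([::(y,true)] ++ c) (bgen R x y).
Proof. by rewrite /bl /bl1 /= tactE InsN Ins_tact InsN Ins_tact opprK cats0 !cat0s -!catA. Qed.

Lemma Ins_bgen_ft a b c : Ins R a b c (bgen R false true) = - Ins R a b c (btL R [:: lv; lu] [::]).
Proof. by rewrite /= btE InsN. Qed.
Lemma Ins_bgen_tf a b c : Ins R a b c (bgen R true false) = Ins R a b c (btL R [:: lu; lv] [::]).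
Proof. by rewrite /= btE. Qed.
Lemma Ins_bgen_ff a b c : Ins R a b c (bgen R false false) = 0.
Proof. exact: Ins0. Qed.
Lemma Ins_bgen_tt a b c : Ins R a b c (bgen R true true) = 0.
Proof. exact: Ins0. Qed.

Lemma letter_case0 Q l : Ins R [::] ([::] ++ Q ++ [::]) [::] (dbr_lw R l cw) =
  << fg (reduce [:: lu; lv] ++ Q ++ reduce ([:: l] ++ [:: lui; lvi])) >>
  - << fg (reduce [:: lu; lv; l] ++ Q ++ reduce [:: lui; lvi]) >>.
Proof.
rewrite Ins_dbr_cw.
case: l => [[] []]; rewrite /lu /lv /lui /lvi;
rewrite ?(Ins_bl_ff, Ins_bl_ft, Ins_bl_tf, Ins_bl_tt);
rewrite ?(Ins_bgen_ft, Ins_bgen_tf, Ins_bgen_ff, Ins_bgen_tt) ?InsN ?Ins_btQ;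
rewrite !reduce'E; cbn [reduce' foldr red_cons' beq negb andb fst snd lu lv lui lvi cat];
rewrite ?(subr0, addr0, add0r, sub0r, opprK, oppr0).
all: rewrite /lu /lv; by [ | rewrite addrC].
Qed.
Lemma letter_case Q l : Ins R [::] Q [::] (dbr_lw R l cw) = Phi R (Q ++ [:: l]) - Phi R (l :: Q).
Proof.
have -> : Ins R [::] Q [::] (dbr_lw R l cw) = Ins R [::] ([::] ++ Q ++ [::]) [::] (dbr_lw R l cw) by rewrite /= cats0.
rewrite letter_case0.
by rewrite !fgQ /Phi -!catA.
Qed.

Lemma dbrw_cw w P : Ins R [::] P [::] (dbrw R w cw) = Phi R (P ++ w) - Phi R (w ++ P).
Proof.
elim: w P => [|l w IH] P.
  by rewrite /= Ins0 cats0 subrr.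
cbn [dbrw]; rewrite tactE InsD !Ins_tact /= !cats0 letter_case IH.
have -> : (w ++ P) ++ [:: l] = w ++ P ++ [:: l] by rewrite catA.
have -> : (P ++ [:: l]) ++ w = P ++ l :: w by rewrite -catA.
by rewrite addrC addrA subrK.
Qed.
End L.

Theorem mainTheorem5 (R : realType) (H : A R) : brK H (cK R) = 0.
Proof.
have hc : cK R = << fg cw >> by [].
have ht : tens H (cK R) = \sum_(x <- msupp H) << H@_x *g (x, fg cw) >>.
  rewrite /tens hc; apply: eq_bigr => x _.
  by rewrite msuppU oner_eq0 big_seq_fset1 mcoeffUU mulr1.
have hred : val (fg cw) = cw by exact: (reduce'E cw).
rewrite /brK ht.
have -> : forall T, dbrK T = Lin (fun p : fgrp * fgrp => dbrw R (val p.1) (val p.2)) T by [].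
rewrite Lin_sum mu_Ins InsE /Ins_def Lin_sum big1 // => x _.
rewrite LinU LinZ hred.
have := dbrw_cw R (val x) [::]; rewrite InsE /Ins_def => ->.
by rewrite cats0 subrr scaler0.
Qed.
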